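(* Let $\alpha'\in (1/2, 1)$. For every $\varepsilon'\in (0, (1-\alpha')/3)$ there exist $\delta >0$ and $n_0'$ such that the following holds for all $n>n_0'$: every $n$-vertex graph $G$ with at least $\lfloor n^2/4\rfloor+1$ edges, minimum degree at least $(1-\delta)n/2$, and $b(G)<\alpha' n/2$ satisfies $$t(G) > (\alpha'(1-\alpha')-4\varepsilon')\frac{n^2}{4}.$$
   Context: Graphs are finite and simple. A book of size $b$ in a graph is an edge that lies in $b$ triangles; $b(G)$ denotes the maximum size of a book in $G$, i.e. the maximum, over all edges $e$ of $G$, of the number of triangles of $G$ containing $e$. $t(G)$ denotes the number of triangles in $G$. *)

(* Defs.v *)
From mathcomp Require Import all_boot all_order all_algebra.
From mathcomp Require Import reals.
Set Implicit Arguments. Unset Strict Implicit. Unset Printing Implicit Defensive.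

Definition simple_graph (n : nat) (g : rel 'I_n) : Prop :=
  symmetric g /\ irreflexive g.

Definition num_edges n (g : rel 'I_n) : nat :=
  #|[set p : 'I_n * 'I_n | (p.1 < p.2)%N && g p.1 p.2]|.

Definition degree n (g : rel 'I_n) (x : 'I_n) : nat := #|[set y | g x y]|.

Definition book_size n (g : rel 'I_n) (x y : 'I_n) : nat :=
  #|[set z | g x z && g y z]|.

(* b(G): maximum book size over all edges (0 if there is no edge) *)
Definition max_book n (g : rel 'I_n) : nat :=
  \max_(p : 'I_n * 'I_n | g p.1 p.2) book_size g p.1 p.2.

Definition num_triangles n (g : rel 'I_n) : nat :=
  #|[set t : 'I_n * 'I_n * 'I_n |
      [&& (t.1.1 < t.1.2)%N, (t.1.2 < t.2)%N,
          g t.1.1 t.1.2, g t.1.1 t.2 & g t.1.2 t.2]]|.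

(* Main.v *)
Require Import Defs.
From mathcomp Require Import all_boot all_order all_algebra.
From mathcomp Require Import reals ring lra zify.
Set Implicit Arguments. Unset Strict Implicit. Unset Printing Implicit Defensive.
Section Comb.
Variables (n : nat) (g : rel 'I_n).
Hypotheses (gsym : symmetric g) (girr : irreflexive g).

Lemma card_sum (T : finType) (P : pred T) : #|[set y | P y]| = \sum_y (P y : nat).
Proof.
rewrite -sum1_card big_mkcond /=; apply: eq_bigr => i _; by rewrite inE; case: (P i).
Qed.

Definition Nb (x : 'I_n) : {set 'I_n} := [set y | g x y].
Definition dS (S : {set 'I_n}) (a : 'I_n) : nat := \sum_(b in S) (g a b : nat).

Lemma degreeE a : degree g a = \sum_b (g a b : nat).
Proof. by rewrite /degree card_sum. Qed.

Lemma deg_split (S : {set 'I_n}) a : degree g a = dS S a + dS (~: S) a.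
Proof.
rewrite degreeE (bigID (fun b => b \in S)) /=; congr (_ + _).
by apply: eq_bigl => b; rewrite inE.
Qed.

Lemma dS_le (S : {set 'I_n}) a : dS S a <= #|S|.
Proof.
rewrite /dS -sum1_card; apply: leq_sum => b _; by case: (g a b).
Qed.

Definition cut (X : {set 'I_n}) : nat := \sum_(a in X) dS (~: X) a.

Lemma cutC (X : {set 'I_n}) : cut (~: X) = cut X.
Proof.
rewrite /cut /dS setCK exchange_big /=; apply: eq_bigr => a _; apply: eq_bigr => b _.
by rewrite gsym.
Qed.

Lemma cut_le (X : {set 'I_n}) : cut X <= #|X| * #|~: X|.
Proof.
rewrite /cut -sum_nat_const; apply: leq_sum => a _; exact: dS_le.
Qed.

Lemma cut_move (X : {set 'I_n}) u : u \in X -> cut (X :\ u) + dS (~: X) u = cut X + dS X u.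
Proof.
move=> uX.
have h1 : forall a, dS (~: (X :\ u)) a = dS (~: X) a + g a u.
  move=> a; rewrite /dS (bigD1 u) /=; last by rewrite !inE eqxx.
  rewrite addnC; congr (_ + _); apply: eq_bigl => b; rewrite !inE.
  by case: (b =P u) => [->|]; rewrite ?uX //= andbT.
rewrite /cut (bigD1 u uX) /= addnC.
have -> : \sum_(a in X :\ u) dS (~: (X :\ u)) a
   = \sum_(i | (i \in X) && (i != u)) dS (~: X) i + \sum_(i | (i \in X) && (i != u)) (g i u : nat).
  rewrite -big_split /=; apply: eq_big => [a|a _]; first by rewrite !inE andbC.
  exact: h1.
have -> : dS X u = \sum_(i | (i \in X) && (i != u)) (g i u : nat).
  rewrite /dS (bigD1 u uX) /= girr add0n; apply: eq_bigr => b _; by rewrite gsym.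
by rewrite addnA.
Qed.

Definition mcut : {set 'I_n} := [arg max_(X > set0) cut X].

Lemma mcut_max (Y : {set 'I_n}) : cut Y <= cut mcut.
Proof.
rewrite /mcut; case: arg_maxnP => //= X _ h; exact: h.
Qed.

Lemma mcut_loc (Z : {set 'I_n}) u : (Z = mcut \/ Z = ~: mcut) -> u \in Z -> dS Z u <= dS (~: Z) u.
Proof.
move=> hZ uZ.
have hmax : cut (Z :\ u) <= cut Z.
  case: hZ => ->; first exact: mcut_max.
  by rewrite cutC; exact: mcut_max.
have := cut_move uZ; lia.
Qed.

Notation T3 := ('I_n * 'I_n * 'I_n)%type.

Definition tri (t : T3) := [&& g t.1.1 t.1.2, g t.1.1 t.2 & g t.1.2 t.2].

Definition Tset : {set T3} :=
  [set t : T3 | [&& (t.1.1 < t.1.2)%N, (t.1.2 < t.2)%N,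
          g t.1.1 t.1.2, g t.1.1 t.2 & g t.1.2 t.2]].

Lemma TsetE : num_triangles g = #|Tset|.
Proof. by []. Qed.

Definition sort3 (t : T3) : T3 :=
  let: (a, b, c) := t in
  if (a < b)%N then (if (b < c)%N then (a, b, c) else if (a < c)%N then (a, c, b) else (c, a, b))
  else (if (a < c)%N then (b, a, c) else if (b < c)%N then (b, c, a) else (c, b, a)).

Definition mem3 (t : T3) (x : 'I_n) := [|| x == t.1.1, x == t.1.2 | x == t.2].

Lemma mem3_sort3 t x : mem3 (sort3 t) x = mem3 t x.
Proof.
case: t => [[a b] c]; rewrite /sort3 /mem3 /=.
by repeat case: ifP => _; case: (x == a); case: (x == b); case: (x == c).
Qed.

Lemma ord_neq (a b : 'I_n) : a != b -> (a : nat) != b.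
Proof. by apply: contra => /eqP h; apply/eqP/val_inj. Qed.

Lemma sort3_in t : tri t -> sort3 t \in Tset.
Proof.
case: t => [[a b] c]; rewrite /tri /= => /and3P[hab hac hbc].
have nab : (a : nat) != b by apply: ord_neq; apply: contraTneq hab => ->; rewrite girr.
have nac : (a : nat) != c by apply: ord_neq; apply: contraTneq hac => ->; rewrite girr.
have nbc : (b : nat) != c by apply: ord_neq; apply: contraTneq hbc => ->; rewrite girr.
have hba : g b a by rewrite gsym.
have hca : g c a by rewrite gsym.
have hcb : g c b by rewrite gsym.
rewrite /sort3; repeat case: ifP => ? /=; rewrite inE /= ?hab ?hac ?hbc ?hba ?hca ?hcb ?andbT; lia.
Qed.

Lemma tri_lower (P : {set T3}) :
  (forall t, t \in P -> tri t) ->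
  {in P &, forall t t', (forall x, mem3 t x = mem3 t' x) -> t = t'} ->
  #|P| <= num_triangles g.
Proof.
move=> htri hinj; rewrite TsetE.
have -> : #|P| = #|[set sort3 t | t in P]|.
  rewrite card_in_imset //.
  move=> t t' ht ht' e; apply: hinj => // x.
  by rewrite -mem3_sort3 e mem3_sort3.
apply: subset_leq_card; apply/subsetP => s /imsetP[t tP ->].
exact: sort3_in (htri t tP).
Qed.

Definition Oset : {set T3} := [set t : T3 | tri t].

Definition p1 (t : T3) : T3 := let: (a, b, c) := t in (a, b, c).
Definition p2 (t : T3) : T3 := let: (a, b, c) := t in (a, c, b).
Definition p3 (t : T3) : T3 := let: (a, b, c) := t in (b, a, c).
Definition p4 (t : T3) : T3 := let: (a, b, c) := t in (b, c, a).
Definition p5 (t : T3) : T3 := let: (a, b, c) := t in (c, a, b).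
Definition p6 (t : T3) : T3 := let: (a, b, c) := t in (c, b, a).

Lemma Oset_sub : Oset \subset (p1 @: Tset :|: p2 @: Tset :|: p3 @: Tset) :|:
                               (p4 @: Tset :|: p5 @: Tset :|: p6 @: Tset).
Proof.
apply/subsetP => t; rewrite inE => ht.
have hs := sort3_in ht.
move: ht hs; case: t => [[a b] c] ht.
rewrite /sort3 !in_setU.
case: ifP => h1; [case: ifP => h2; [|case: ifP => h3] | case: ifP => h2; [|case: ifP => h3]] => hs.
- by rewrite (imset_f p1 hs) ?orbT.
- by rewrite (imset_f p2 hs) ?orbT.
- by rewrite (imset_f p4 hs) ?orbT.
- by rewrite (imset_f p3 hs) ?orbT.
- by rewrite (imset_f p5 hs) ?orbT.
- by rewrite (imset_f p6 hs) ?orbT.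
Qed.

Lemma Oset_card : #|Oset| <= 6 * num_triangles g.
Proof.
rewrite TsetE; apply: leq_trans (subset_leq_card Oset_sub) _.
have hU : forall A B : {set T3}, #|A :|: B| <= #|A| + #|B|.
  by move=> A B; rewrite cardsU leq_subr.
have hI : forall f : T3 -> T3, #|f @: Tset| <= #|Tset| by move=> f; exact: leq_imset_card.
apply: (leq_trans (hU _ _)).
have e1 := hU (p1 @: Tset :|: p2 @: Tset) (p3 @: Tset).
have e2 := hU (p1 @: Tset) (p2 @: Tset).
have e3 := hU (p4 @: Tset :|: p5 @: Tset) (p6 @: Tset).
have e4 := hU (p4 @: Tset) (p5 @: Tset).
have := hI p1; have := hI p2; have := hI p3; have := hI p4; have := hI p5; have := hI p6.
move=> h6 h5 h4 h3 h2 h1.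
apply: leq_trans (leq_add (leq_trans e1 (leq_add (leq_trans e2 (leq_add h1 h2)) h3)) (leq_trans e3 (leq_add (leq_trans e4 (leq_add h4 h5)) h6))) _.
lia.
Qed.

Definition E2 (x : 'I_n) : nat := \sum_a \sum_b ((g x a && g x b && g a b) : nat).

Lemma sumE2 : \sum_x E2 x = #|Oset|.
Proof.
rewrite /Oset (card_sum (T:=T3) tri).
transitivity (\sum_(p : 'I_n * 'I_n) \sum_c (tri (p, c) : nat)); last first.
  by rewrite pair_bigA /=; apply: eq_bigr => [[p c]] _.
rewrite -(pair_bigA _ (fun x a => \sum_c (tri (x, a, c) : nat))) /=.
apply: eq_bigr => x _; apply: eq_bigr => a _; apply: eq_bigr => b _.
by rewrite /tri /= andbA.
Qed.

Lemma exists_small : \sum_x E2 x < n * n.+1 -> exists x, E2 x <= n.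
Proof.
move=> hs; case: (boolP [exists x, E2 x <= n]) => [/existsP//|/existsPn h].
exfalso; move: hs; rewrite ltnNge; move/negP; apply.
have -> : n * n.+1 = \sum_(x : 'I_n) n.+1 by rewrite sum_nat_const card_ord.
apply: leq_sum => x _; move: (h x); by rewrite -ltnNge.
Qed.

Lemma E2E x : E2 x = \sum_(a in Nb x) dS (Nb x) a.
Proof.
rewrite /E2 [RHS]big_mkcond /=; apply: eq_bigr => a _.
rewrite /dS inE; case: (g x a) => /=; last by rewrite big1.
rewrite [RHS]big_mkcond /=; apply: eq_bigr => b _; rewrite inE; by case: (g x b).
Qed.

Lemma cut_E2 x : cut (Nb x) + E2 x = \sum_(a in Nb x) degree g a.
Proof.
rewrite E2E /cut -big_split /=; apply: eq_bigr => a _.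
by rewrite (deg_split (Nb x)) addnC.
Qed.

Lemma card_pairs (X : {set 'I_n}) :
  #|[set p : 'I_n * 'I_n | (p.1 \in X) && (p.2 \notin X) && g p.1 p.2]| = cut X.
Proof.
rewrite card_sum /cut /dS -(pair_bigA _ (fun a b => ((a \in X) && (b \notin X) && g a b : nat))) /=.
rewrite [RHS]big_mkcond /=; apply: eq_bigr => a _; case: (a \in X) => /=; last by rewrite big1.
rewrite [RHS]big_mkcond /=; apply: eq_bigr => b _; by rewrite inE; case: (b \in X).
Qed.

Lemma edges_le_cut (X : {set 'I_n}) :
  (forall a b, g a b -> (a \in X) != (b \in X)) -> num_edges g <= cut X.
Proof.
move=> hX; rewrite /num_edges -card_pairs.
pose f (p : 'I_n * 'I_n) := if p.1 \in X then p else (p.2, p.1).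
rewrite -(card_in_imset (f := f)).
  apply: subset_leq_card; apply/subsetP => q /imsetP[[a b]].
  rewrite inE /= => /andP[ab gab] ->; rewrite /f /= inE /=.
  move: (hX a b gab); case: (boolP (a \in X)) => ha; case: (boolP (b \in X)) => hb //= _.
  - by rewrite ha gab.
  - by rewrite ha gsym gab.
move=> [a b] [a' b']; rewrite !inE /= => /andP[ab _] /andP[ab' _]; rewrite /f /=.
case: (a \in X); case: (a' \in X) => [] [] e1 e2; subst => //; lia.
Qed.

Lemma sum_two (F : 'I_n -> nat) (u v : 'I_n) : u != v ->
  (forall s, s != u -> s != v -> F s = 0) -> \sum_s F s = F u + F v.
Proof.
move=> nuv h; rewrite (bigD1 u) //= (bigD1 v) /=; last by rewrite eq_sym.
rewrite big1 ?addn0 // => s /andP[su sv]; exact: h.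
Qed.

Section Inside.
Variables (Z : {set 'I_n}) (u v : 'I_n).
Hypotheses (uZ : u \in Z) (vZ : v \in Z) (guv : g u v).

Definition cc (s w : 'I_n) : nat := \sum_(z in ~: Z) ((g s z && g w z) : nat).
Definition SS (s o : 'I_n) : {set 'I_n} := [set w in Z | g s w && (w != o)].

Definition PP : {set T3} :=
  [set t : T3 | (((t.1.1 == u) && (t.1.2 != v)) || ((t.1.1 == v) && (t.1.2 != u)))
       && (t.1.2 \in Z) && (t.2 \in ~: Z) && tri t].

Lemma uv_neq : u != v.
Proof. by apply: contraTneq guv => ->; rewrite girr. Qed.

Lemma PP_le : #|PP| <= num_triangles g.
Proof.
apply: tri_lower.
  by move=> t; rewrite inE => /andP[_ ->].
move=> [[s w] z] [[s' w'] z']; rewrite !inE /= /tri /=.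
move=> /andP[/andP[/andP[hsw wZ] zZ] /and3P[gsw gsz gwz]] /andP[/andP[/andP[hsw' wZ'] zZ'] /and3P[gsw' gsz' gwz']] hm.
have sZ : s \in Z by case/orP: hsw => /andP[/eqP -> _].
have sZ' : s' \in Z by case/orP: hsw' => /andP[/eqP -> _].
have nws : w != s by apply: contraTneq gsw => ->; rewrite girr.
have nws' : w' != s' by apply: contraTneq gsw' => ->; rewrite girr.
have wuv : (w != u) && (w != v).
  case/orP: hsw => /andP[/eqP es h]; subst s; by rewrite h ?nws // andbT.
have wuv' : (w' != u) && (w' != v).
  case/orP: hsw' => /andP[/eqP es h]; subst s'; by rewrite h ?nws' // andbT.
have suv : (s == u) || (s == v) by case/orP: hsw => /andP[-> _]; rewrite ?orbT.
have suv' : (s' == u) || (s' == v) by case/orP: hsw' => /andP[-> _]; rewrite ?orbT.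
have m1 := hm z'; have m2 := hm s'; have m3 := hm w'.
rewrite /mem3 /= !eqxx ?orbT in m1 m2 m3.
have ez : z' = z.
  move: m1; case/or3P => /eqP e //; subst; by rewrite ?sZ ?wZ in zZ'.
have es : s' = s.
  move: m2; case/or3P => /eqP e //; subst.
  - move: wuv; case/orP: suv' => /eqP ->; by rewrite eqxx ?andbF.
  - by move: zZ; rewrite ?sZ' ?wZ'.
have ew : w' = w.
  move: m3; case/or3P => /eqP e //; subst.
  - move: wuv'; case/orP: suv => /eqP ->; by rewrite eqxx ?andbF.
  - by move: zZ; rewrite ?sZ' ?wZ'.
by subst.
Qed.

Lemma PP_card : #|PP| = \sum_(w in SS u v) cc u w + \sum_(w in SS v u) cc v w.
Proof.
rewrite /PP card_sum.
transitivity (\sum_(p : 'I_n * 'I_n) \sum_c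
  (((((p.1 == u) && (p.2 != v)) || ((p.1 == v) && (p.2 != u)))
       && (p.2 \in Z) && (c \in ~: Z) && tri (p, c)) : nat)).
  by rewrite pair_bigA /=; apply: eq_bigr => [[p c]] _.
rewrite -(pair_bigA _ (fun s w => \sum_c
  (((((s == u) && (w != v)) || ((s == v) && (w != u)))
       && (w \in Z) && (c \in ~: Z) && tri (s, w, c)) : nat))) /=.
have nuv := uv_neq.
rewrite (sum_two nuv); last first.
  move=> s su sv; apply: big1 => w _; apply: big1 => c _.
  by rewrite (negbTE su) (negbTE sv).
rewrite eqxx (negbTE nuv) eq_sym (negbTE nuv) eqxx /=.
congr (_ + _).
- rewrite /cc [RHS]big_mkcond /=; apply: eq_bigr => w _.
  rewrite inE /tri /=.
  case: (w \in Z) => /=; last by rewrite big1 // => c _; rewrite andbF.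
  case: (g u w) => /=; last by apply: big1 => c _; rewrite !andbF.
  case: (w != v) => /=; last by apply: big1.
  rewrite [RHS]big_mkcond /=; apply: eq_bigr => c _; by case: (c \in ~: Z).
- rewrite /cc [RHS]big_mkcond /=; apply: eq_bigr => w _.
  rewrite inE /tri /=.
  case: (w \in Z) => /=; last by rewrite big1 // => c _; rewrite andbF.
  case: (g v w) => /=; last by apply: big1 => c _; rewrite !andbF.
  case: (w != u) => /=; last by apply: big1.
  rewrite [RHS]big_mkcond /=; apply: eq_bigr => c _; by case: (c \in ~: Z).
Qed.

Lemma cc_ge s w : dS (~: Z) s + dS (~: Z) w <= cc s w + #|~: Z|.
Proof.
rewrite /cc /dS -sum1_card -!big_split /=; apply: leq_sum => z _.
by case: (g s z); case: (g w z).
Qed.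

Lemma SS_card s o : o \in Z -> g s o -> dS Z s = #|SS s o| + 1.
Proof.
move=> oZ gso; rewrite /dS (bigD1 o oZ) /= gso addnC; congr (_ + _).
rewrite -sum1_card big_mkcond [RHS]big_mkcond; apply: eq_bigr => w _.
rewrite !inE; case: (g s w); case: (w != o); rewrite ?andbT ?andbF //=; case hw: (w \in Z); move: hw; rewrite unfold_in => -> //.
Qed.

Definition MM := \sum_(w in Z) (#|~: Z| - dS (~: Z) w).

Lemma MM_cut : MM + cut Z = #|Z| * #|~: Z|.
Proof.
rewrite /MM /cut -big_split /= -sum_nat_const; apply: eq_bigr => w _.
by rewrite subnK //; apply: dS_le.
Qed.

Lemma SS_sub s o : \sum_(w in SS s o) (#|~: Z| - dS (~: Z) w) <= MM.
Proof.
rewrite /MM [X in _ <= X](bigID (fun w => g s w && (w != o))) /=.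
apply: leq_trans (leq_addr _ _); apply: eq_leq.
by apply: eq_bigl => w; rewrite inE.
Qed.

Lemma SS_lower s o :
  #|SS s o| * dS (~: Z) s <= \sum_(w in SS s o) cc s w + \sum_(w in SS s o) (#|~: Z| - dS (~: Z) w).
Proof.
rewrite -big_split /= -sum_nat_const; apply: leq_sum => w _.
have := cc_ge s w; have := dS_le (~: Z) w. move: (#|~: Z|) (cc s w) (dS (~: Z) s) (dS (~: Z) w) => k c1 c2 c3. lia.
Qed.

Lemma tri_bound :
  (dS Z u - 1) * dS (~: Z) u + (dS Z v - 1) * dS (~: Z) v <= num_triangles g + 2 * MM.
Proof.
have gvu : g v u by rewrite gsym.
rewrite (SS_card vZ guv) (SS_card uZ gvu) !addnK.
have := SS_lower u v; have := SS_lower v u; have := SS_sub u v; have := SS_sub v u.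
have := PP_le; rewrite PP_card; lia.
Qed.

Lemma book_bound : dS (~: Z) u + dS (~: Z) v <= max_book g + #|~: Z|.
Proof.
apply: leq_trans (cc_ge u v) _; rewrite leq_add2r.
apply: (@leq_trans (book_size g u v)).
  rewrite /book_size card_sum /cc [X in X <= _]big_mkcond /=; apply: leq_sum => z _.
  by case: (z \in ~: Z).
rewrite /max_book.
exact: (@leq_bigmax_cond _ (fun p : 'I_n * 'I_n => g p.1 p.2) (fun p => book_size g p.1 p.2) (u, v)).
Qed.

End Inside.

End Comb.

Import Order.TTheory GRing.Theory Num.Theory.
Local Open Scope ring_scope.

Section RealPart.
Variable R : realType.
Implicit Types K x p q a b L U S Q : R.

Definition phi K x : R := x * (K - x).

Lemma conc K p q x : p <= x -> x <= q -> phi K p <= phi K x \/ phi K q <= phi K x.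
Proof.
move=> px xq; rewrite /phi.
have [h|h] := lerP 0 (K - x - p).
  left; nra.
right; nra.
Qed.

Lemma pair_bound K L U S a b Q :
  L <= a -> a <= U -> L <= b -> b <= U -> a + b <= S ->
  Q < phi K L + phi K U -> Q < phi K U + phi K (S - U) -> Q < phi K L + phi K L ->
  Q < phi K a + phi K b.
Proof.
move=> La aU Lb bU abS h1 h2 h3.
have [c|c] := lerP (L + U) (a + b).
- have e : phi K U + phi K (a + b - U) <= phi K a + phi K b.
    rewrite /phi; nra.
  have [e2|e2] := @conc K L (S - U) (a + b - U) ltac:(lra) ltac:(lra); lra.
- have e : phi K L + phi K (a + b - L) <= phi K a + phi K b.
    rewrite /phi; nra.
  have [e2|e2] := @conc K L U (a + b - L) ltac:(lra) ltac:(lra); lra.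
Qed.
Lemma numeric (al ep N y m : R) :
  1/2 < al < 1 -> 0 < ep < (1 - al)/3 ->
  32 < ep^+2 * N -> 100 < ep * N ->
  0 <= y <= N ->
  (y - N/2)^+2 <= (ep^+2/16)/2 * N^+2 + N ->
  m <= N^+2/4 - ((1 - ep^+2/16) * N / 2)^+2 + N ->
  forall DD TT, DD = (1 - ep^+2/16) * N / 2 -> TT = (al*(1-al) - 4*ep) * N^+2 / 4 ->
  (TT + 2 * m < phi (DD - 1) (DD/2) + phi (DD-1) y)%R /\
      (TT + 2 * m < phi (DD - 1) y + phi (DD-1) (al * N / 2))%R /\
      (TT + 2 * m < phi (DD - 1) (DD/2) + phi (DD-1) (DD/2))%R.
Proof.
move=> /andP[a1 a2] /andP[e1 e2] hN1 hN2 /andP[y0 yN] hy hm DD TT eD0 hT.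
have N0 : 0 < N by nra.
set d := ep^+2/16.
have d0 : 0 < d by rewrite /d; nra.
have dep : d <= ep / 16 by rewrite /d; nra.
have dN : 2 <= d * N by rewrite /d; nra.
have ed : (ep/4)^+2 = d by rewrite /d; field.
move: hy hm; rewrite -/d => hy hm.
have eD : DD = (1 - d) * N / 2 by rewrite eD0.
clearbody d.
have hy2 : (y - N/2)^+2 <= (ep/4)^+2 * N^+2.
  rewrite ed.
  have : N <= d * N^+2 / 2 by rewrite expr2; nra.
  lra.
have h0 : 0 <= ep/4 * N by nra.
have hy2' : (y - N/2)^+2 <= (ep/4 * N)^+2 by rewrite exprMn.
have hy3 : y - N/2 <= ep/4 * N.
  rewrite leNgt; apply/negP => hlt.
  have : (ep/4 * N)^+2 < (y - N/2)^+2.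
    by rewrite ltr_pXn2r // ?nnegrE; lra.
  lra.
have hy4 : N/2 - y <= ep/4 * N.
  rewrite leNgt; apply/negP => hlt.
  have : (ep/4 * N)^+2 < (N/2 - y)^+2.
    by rewrite ltr_pXn2r // ?nnegrE; lra.
  have : (N/2 - y)^+2 = (y - N/2)^+2 by rewrite -sqrrN opprB.
  lra.
have e6 : al * (1 - al) <= 1/4 by nra.
have pU : - N * (ep/4 * N + d * N / 2 + 1) <= phi (DD - 1) y.
  rewrite /phi eD.
  have : - (ep/4 * N + d * N / 2 + 1) <= (1 - d) * N / 2 - 1 - y by lra.
  nra.
have pL : N^+2/16 - d * N^+2/8 - N/4 <= phi (DD - 1) (DD/2).
  rewrite /phi eD; nra.
have pA : al*(1-al)*N^+2/4 - d*N^+2/4 - N/2 <= phi (DD-1) (al * N / 2).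
  rewrite /phi eD; nra.
have hm2 : 2 * m <= d * N^+2 + 2 * N.
  move: hm; rewrite -/d; nra.
have kk : ep * N^+2 = (ep * N) * N by rewrite expr2 mulrA.
have kd : d * N^+2 = (d * N) * N by rewrite expr2 mulrA.
have kt : ep / 4 * N * N = ep * N^+2 / 4 by rewrite expr2; field.
rewrite hT; split; [|split]; nra.
Qed.
End RealPart.

Arguments phi {R}.
Arguments pair_bound {R}.
Arguments numeric {R}.

Lemma quarter_le (k m : nat) : (k * m <= (k + m) ^ 2 %/ 4)%N.
Proof. rewrite leq_divRL // mulnC; exact: (nat_AGM2 k m). Qed.

Lemma aux_phi (R : realType) (p A D : R) : D <= p + A -> 0 <= A -> phi (D - 1) A <= (p - 1) * A.
Proof. move=> h1 h2; rewrite /phi mulrC; apply: ler_wpM2r => //; lra. Qed.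

Lemma aux_sq (R : realType) (N y z c D d : R) : z + y = N -> D = (1-d)*N/2 -> 0 <= d ->
  D * D - N <= c -> c <= z * y ->
  (y - N/2)^+2 <= d/2*N^+2 + N /\ z * y - c <= N^+2/4 - D^+2 + N.
Proof.
move=> hz hD d0 h1 h2.
have ez : z = N - y by lra.
have e1 : z * y = N^+2/4 - (y - N/2)^+2 by rewrite ez; field.
have e2 : N^+2/4 - D^+2 = d/2 * N^+2 - d^+2 * N^+2/4 by rewrite hD; field.
have e3 : 0 <= d^+2 * N^+2/4 by apply: divr_ge0 => //; apply: mulr_ge0; apply: sqr_ge0.
have e4 : 0 <= (y - N/2)^+2 by apply: sqr_ge0.
have e5 : D^+2 = D * D by rewrite expr2.
split; lra.
Qed.

Theorem theorem5 (R : realType) (alpha' : R) :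
  1 / 2 < alpha' < 1 ->
  forall eps' : R, 0 < eps' < (1 - alpha') / 3 ->
  exists (delta : R) (n0' : nat), 0 < delta /\
    forall (n : nat) (g : rel 'I_n), (n0' < n)%N ->
      simple_graph g ->
      ((n ^ 2) %/ 4 + 1 <= num_edges g)%N ->
      (forall x : 'I_n, (1 - delta) * n%:R / 2 <= (degree g x)%:R) ->
      (max_book g)%:R < alpha' * n%:R / 2 ->
      (alpha' * (1 - alpha') - 4 * eps') * (n%:R ^+ 2) / 4 < (num_triangles g)%:R.
Proof.
move=> ha eps' he.
have /andP[a1 a2] := ha; have /andP[e1 e2] := he.
pose Bnd := 32 / eps'^+2 + 100 / eps'.
have B0 : 0 <= Bnd by rewrite /Bnd; apply: addr_ge0; apply: divr_ge0 => //; nra.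
exists (eps'^+2/16), (Num.Def.archi_bound Bnd); split.
  by apply: divr_gt0 => //; apply: exprn_gt0.
move=> n g hn [gsym girr] hedges hdeg hbook.
set N : R := n%:R.
have hB := archi_boundP B0.
have hNB : Bnd < N.
  apply: lt_le_trans hB _; rewrite /N ler_nat; exact: ltnW.
have N0 : 0 < N by apply: le_lt_trans hNB.
have p1 : 0 <= 32 / eps'^+2 by apply: divr_ge0 => //; nra.
have p2 : 0 <= 100 / eps' by apply: divr_ge0; lra.
have hN1 : 32 < eps'^+2 * N.
  have h : 32 / eps'^+2 < N by move: hNB; rewrite /Bnd; lra.
  by move: h; rewrite ltr_pdivrMr ?exprn_gt0 // mulrC.
have hN2 : 100 < eps' * N.
  have h : 100 / eps' < N by move: hNB; rewrite /Bnd; lra.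
  by move: h; rewrite ltr_pdivrMr // mulrC.
set T := (alpha' * (1 - alpha') - 4 * eps') * (N ^+ 2) / 4.
set t := num_triangles g.
rewrite ltNge; apply/negP => ht.
have e6 : alpha' * (1 - alpha') <= 1/4 by nra.
have hT : T <= N^+2 / 16 by rewrite /T; nra.
have hsum : (\sum_x E2 g x < n * n.+1)%N.
  rewrite sumE2; apply: leq_ltn_trans (Oset_card gsym girr) _.
  have h : ((6 * t)%:R : R) < (n * n.+1)%:R.
    rewrite !natrM -/N -addn1 natrD -/N.
    have : (0:R) <= t%:R by [].
    nra.
  by rewrite ltr_nat in h.
have [x hx] := exists_small hsum.
set Dr := (1 - eps'^+2/16) * N / 2.
have Dr0 : 0 <= Dr by rewrite /Dr; nra.
have hA : Dr * Dr - N <= (cut g (Nb g x))%:R.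
  have e := cut_E2 g x.
  have hs : #|Nb g x|%:R * Dr <= (\sum_(a in Nb g x) degree g a)%:R.
    rewrite natr_sum mulr_natl -sumr_const; apply: ler_sum => a _; exact: hdeg.
  have hdx : Dr <= #|Nb g x|%:R by exact: hdeg x.
  have hx' : (E2 g x)%:R <= N by rewrite /N ler_nat.
  have hdd : Dr * Dr <= #|Nb g x|%:R * Dr by apply: ler_wpM2r.
  move: hs; rewrite -e natrD; lra.
set X := mcut g.
have hX : (cut g (Nb g x) <= cut g X)%N by exact: mcut_max.
have [a [b [gab hab]]] : exists a b, g a b /\ (a \in X) = (b \in X).
  case: (boolP [exists a, exists b, g a b && ((a \in X) == (b \in X))]).
    by move=> /existsP[a /existsP[b /andP[gab /eqP hab]]]; exists a, b.
  move=> /existsPn hno; exfalso.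
  have hno' : forall a b, g a b -> (a \in X) != (b \in X).
    move=> a b gab; move: (hno a) => /existsPn /(_ b); by rewrite gab.
  have h1 := edges_le_cut gsym hno'.
  have h2 := cut_le g X.
  have h3 : (#|X| * #|~: X| <= n ^ 2 %/ 4)%N.
    have := quarter_le #|X| #|~: X|; by rewrite cardsC card_ord.
  by have := leq_trans hedges (leq_trans h1 (leq_trans h2 h3)); rewrite addn1 ltnn.
pose Z := if a \in X then X else ~: X.
have hZ : Z = mcut g \/ Z = ~: mcut g by rewrite /Z; case: (a \in X); [left|right].
have aZ : a \in Z by rewrite /Z; case: ifP => h //; rewrite inE h.
have bZ : b \in Z by rewrite /Z; case: ifP => h; rewrite ?inE -hab h.
have cutZ : cut g Z = cut g X by rewrite /Z; case: (a \in X) => //; rewrite (cutC gsym).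
have gba : g b a by rewrite gsym.
have la := mcut_loc gsym girr hZ aZ.
have lb := mcut_loc gsym girr hZ bZ.
have da := deg_split g Z a.
have db := deg_split g Z b.
have tb := tri_bound gsym girr aZ bZ gab.
have bb := book_bound Z gab.
have Aly := dS_le g (~: Z) a.
have Bly := dS_le g (~: Z) b.
have mc := MM_cut g Z.
have zy : (#|Z| + #|~: Z| = n)%N by rewrite cardsC card_ord.
have pa1 : (1 <= dS g Z a)%N by rewrite (SS_card bZ gab) addn1.
have pb1 : (1 <= dS g Z b)%N by rewrite (SS_card aZ gba) addn1.
move: la lb da db tb bb Aly Bly mc zy pa1 pb1 hX.
rewrite cutZ.
move: (dS g Z a) (dS g (~: Z) a) (dS g Z b) (dS g (~: Z) b) (MM g Z) (cut g X)
      #|Z| #|~: Z| => pa A pb B M cX zc yc la lb da db tb bb Aly Bly mc zy pa1 pb1 hX.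
have hda := hdeg a; have hdb := hdeg b.
rewrite da in hda; rewrite db in hdb.
rewrite !natrD in hda hdb.
move: tb; rewrite -(ler_nat R) natrD !natrM natrD natrM !natrB // => tb.
move: bb; rewrite -(ler_nat R) !natrD => bb.
move/(congr1 (fun k : nat => k%:R : R)): mc; rewrite /= natrD natrM => mc.
move/(congr1 (fun k : nat => k%:R : R)): zy; rewrite /= natrD => zy.
move: la lb Aly Bly hX; rewrite -!(ler_nat R) => la lb Aly Bly hX.
have d0 : 0 <= eps'^+2/16 :> R by apply: divr_ge0 => //; apply: sqr_ge0.
have hcz : cX%:R <= zc%:R * yc%:R :> R.
  have : 0 <= M%:R :> R by [].
  lra.
have [hy hm] := @aux_sq R N yc%:R zc%:R cX%:R Dr (eps'^+2/16) zy erefl d0 (le_trans hA hX) hcz.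
have hm' : M%:R <= N ^+ 2 / 4 - ((1 - eps' ^+ 2 / 16) * N / 2) ^+ 2 + N.
  have -> : M%:R = zc%:R * yc%:R - cX%:R :> R by lra.
  exact: hm.
have y0 : 0 <= yc%:R :> R by [].
have yN : yc%:R <= N by have : 0 <= zc%:R :> R by []; lra.
have hyy : (0 <= yc%:R :> R) && (yc%:R <= N) by rewrite y0 yN.
have [n1 [n2 n3]] := numeric alpha' eps' N yc%:R M%:R ha he hN1 hN2 hyy hy hm' Dr T erefl erefl.
have eDr : Dr = (1 - eps'^+2/16) * n%:R / 2 by [].
have eN : N = n%:R by [].
have hdA : Dr / 2 <= A%:R by rewrite eDr; lra.
have hdB : Dr / 2 <= B%:R by rewrite eDr; lra.
have hbk : A%:R + B%:R <= yc%:R + alpha' * N / 2 by rewrite eN; lra.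
have A0 : 0 <= A%:R :> R by [].
have B0' : 0 <= B%:R :> R by [].
have hS : yc%:R + alpha' * N / 2 - yc%:R = alpha' * N / 2 by ring.
have pb' := @pair_bound R (Dr - 1) (Dr/2) yc%:R (yc%:R + alpha' * N / 2) A%:R B%:R (T + 2 * M%:R)
  hdA Aly hdB Bly hbk n1 ltac:(rewrite hS; exact: n2) n3.
have f1 := @aux_phi R _ _ _ hda A0.
have f2 := @aux_phi R _ _ _ hdb B0'.
rewrite -eDr in f1 f2.
have : T < t%:R by lra.
by rewrite ltNge ht.
Qed.
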